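(* Let $\phi:\mathbb{R}^m\to\mathbb{R}$ be a sublinear function, $\lambda\in\mathbb{R}^n$ with $\|\lambda\|=1$, and $C=\{(x,y)\in\mathbb{R}^{n+m}:\phi(y)\le\lambda^\mathsf{T} x\}$. Let $(\bar x,\bar y)\in C$ be such that $\phi$ is differentiable at $\bar y$ and $\phi(\bar y)=\lambda^\mathsf{T}\bar x$. Then $(\bar x,\bar y)$ exposes the valid inequality $-\lambda^\mathsf{T} x+\nabla\phi(\bar y)^\mathsf{T} y\le0$ with respect to $C$.
   Context: A function is sublinear if it is convex and positively homogeneous. An inequality $\alpha^\mathsf{T} z\le\beta$ (written $(\alpha,\beta)$) is valid for $C$ if it holds on $C$; it is non-trivial if $\alpha\neq0$. A point $z_0$ exposes a valid inequality $(\alpha,\beta)$ with respect to a convex set $C$ if $\alpha^\mathsf{T} z_0=\beta$ and for every non-trivial valid inequality $\gamma^\mathsf{T} z\le\delta$ for $C$ with $\gamma^\mathsf{T} z_0=\delta$ there is $\mu>0$ with $\gamma=\mu\alpha$ and $\delta=\mu\beta$. *)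

(* Defs.v *)
From HB Require Import structures.
From mathcomp Require Import all_boot all_order all_algebra.
From mathcomp Require Import all_classical all_reals all_analysis.
Set Implicit Arguments. Unset Strict Implicit. Unset Printing Implicit Defensive.
Import Order.TTheory GRing.Theory Num.Theory.
Import numFieldNormedType.Exports.
Local Open Scope classical_set_scope.
Local Open Scope ring_scope.

Definition dotv (R : realType) (k : nat) (u v : 'rV[R]_k) : R :=
  \sum_(i < k) u 0 i * v 0 i.

Definition enorm (R : realType) (k : nat) (u : 'rV[R]_k) : R :=
  Num.sqrt (dotv u u).

Definition convex_fun (R : realType) (k : nat) (f : 'rV[R]_k -> R) : Prop :=
  forall (y1 y2 : 'rV[R]_k) (t : R), 0 <= t -> t <= 1 ->
    f (t *: y1 + (1 - t) *: y2) <= t * f y1 + (1 - t) * f y2.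

Definition pos_homogeneous (R : realType) (k : nat) (f : 'rV[R]_k -> R) : Prop :=
  forall (t : R) (y : 'rV[R]_k), 0 < t -> f (t *: y) = t * f y.

Definition sublinear (R : realType) (k : nat) (f : 'rV[R]_k -> R) : Prop :=
  convex_fun f /\ pos_homogeneous f.

(* Points of R^{n+m} are pairs (x, y) with x in R^n, y in R^m; an inequality
   alpha^T z <= beta has alpha = (ax, ay) in R^n x R^m. *)
Definition pdot (R : realType) (n m : nat)
  (a z : 'rV[R]_n * 'rV[R]_m) : R := dotv a.1 z.1 + dotv a.2 z.2.

Definition valid_ineq (R : realType) (n m : nat)
  (C : set ('rV[R]_n * 'rV[R]_m)) (a : 'rV[R]_n * 'rV[R]_m) (b : R) : Prop :=
  forall z, C z -> pdot a z <= b.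

Definition nontrivial (R : realType) (n m : nat) (a : 'rV[R]_n * 'rV[R]_m) : Prop :=
  a <> (0, 0).

Definition exposes (R : realType) (n m : nat)
  (C : set ('rV[R]_n * 'rV[R]_m)) (z0 : 'rV[R]_n * 'rV[R]_m)
  (a : 'rV[R]_n * 'rV[R]_m) (b : R) : Prop :=
  pdot a z0 = b /\
  forall (g : 'rV[R]_n * 'rV[R]_m) (d : R),
    nontrivial g -> valid_ineq C g d -> pdot g z0 = d ->
    exists mu : R, 0 < mu /\ g = (mu *: a.1, mu *: a.2) /\ d = mu * b.

Definition grad (R : realType) (k : nat) (f : 'rV[R]_k -> R) (y : 'rV[R]_k)
  : 'rV[R]_k := \row_(j < k) ('d f y (delta_mx 0 j : 'rV[R]_k)).

(* Main.v *)
Require Import Defs.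
From HB Require Import structures.
From mathcomp Require Import all_boot all_order all_algebra.
From mathcomp Require Import all_classical all_reals all_analysis.
From mathcomp Require Import ring lra.
Import Order.TTheory GRing.Theory Num.Theory.
Import numFieldNormedType.Exports.
Local Open Scope classical_set_scope.
Local Open Scope ring_scope.

Lemma D_sandwich (R : realType) k (f : 'rV[R]_k -> R) a v c :
  derivable f a v ->
  (forall h, 0 < h -> c <= h^-1 * (f (h *: v + a) - f a)) ->
  (forall h, -1 < h -> h < 0 -> h^-1 * (f (h *: v + a) - f a) <= c) ->
  'D_v f a = c.
Proof.
move=> dfc hr hl.
have El := cvg_at_leftE _ _ dfc.
have Er := cvg_at_rightE _ _ dfc.
apply/eqP; rewrite eq_le; apply/andP; split.
  rewrite /derive El.
  apply: limr_le.
    apply/cvg_ex; eexists; apply: cvg_trans dfc; apply: cvg_app.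
    move=> A [e egt0 Ae]; exists e => // x xe xgt0; apply: Ae => //.
    exact/ltr0_neq0.
  near=> h; apply: hl; last by near: h; exists 1 => /=.
  near: h; exists 1 => //= h; rewrite /ball_ /= sub0r normrN ltr_norml => /andP[? ?] ?; lra.
rewrite /derive Er.
apply: limr_ge.
  apply/cvg_ex; eexists; apply: cvg_trans dfc; apply: cvg_app.
  move=> A [e egt0 Ae]; exists e => // x xe xgt0; apply: Ae => //.
  exact/lt0r_neq0.
near=> h; apply: hr; near: h; exists 1 => /=.
Unshelve. all: by end_near. Qed.

Section Dot.
Variables (R : realType) (k : nat).
Implicit Types (u v w : 'rV[R]_k).

Lemma dotvC u v : dotv u v = dotv v u.
Proof. by apply: eq_bigr => i _; rewrite mulrC. Qed.
Lemma dotvDr u v w : dotv u (v + w) = dotv u v + dotv u w.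
Proof. by rewrite /dotv -big_split; apply: eq_bigr => i _; rewrite mxE mulrDr. Qed.
Lemma dotvZr u (c : R) v : dotv u (c *: v) = c * dotv u v.
Proof. by rewrite /dotv mulr_sumr; apply: eq_bigr => i _; rewrite mxE mulrCA. Qed.
Lemma dotvNr u v : dotv u (- v) = - dotv u v.
Proof. by rewrite -scaleN1r dotvZr mulN1r. Qed.
Lemma dotvBr u v w : dotv u (v - w) = dotv u v - dotv u w.
Proof. by rewrite dotvDr dotvNr. Qed.
Lemma dotv0r u : dotv u 0 = 0.
Proof. by rewrite -(scale0r 0) dotvZr mul0r. Qed.
Lemma dotvDl u v w : dotv (v + w) u = dotv v u + dotv w u.
Proof. by rewrite dotvC dotvDr !(dotvC u). Qed.
Lemma dotvZl u (c : R) v : dotv (c *: v) u = c * dotv v u.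
Proof. by rewrite dotvC dotvZr dotvC. Qed.
Lemma dotvNl u v : dotv (- v) u = - dotv v u.
Proof. by rewrite dotvC dotvNr dotvC. Qed.
Lemma dotv_delta u (j : 'I_k) : dotv u (delta_mx 0 j) = u 0 j.
Proof.
rewrite /dotv (bigD1 j) //= mxE !eqxx mulr1 big1 ?addr0 // => i /negbTE ne.
by rewrite mxE ne andbF mulr0.
Qed.
Lemma dotv_ge0 u : 0 <= dotv u u.
Proof. by apply: sumr_ge0 => i _; rewrite -expr2 sqr_ge0. Qed.
Lemma dotv_eq0 u : dotv u u <= 0 -> u = 0.
Proof.
move=> h; have h0 : dotv u u = 0 by apply/eqP; rewrite eq_le h dotv_ge0.
move/psumr_eq0P: h0 => H.
apply/rowP => j; rewrite mxE; apply/eqP; rewrite -sqrf_eq0 expr2 H //.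
by move=> i _; rewrite -expr2 sqr_ge0.
Qed.
End Dot.

Lemma dot_grad (R : realType) k (f : 'rV[R]_k -> R) y v :
  dotv (grad f y) v = 'd f y v.
Proof.
rewrite /grad /dotv {2}(row_sum_delta v) linear_sum; apply: eq_bigr => j _.
by rewrite mxE linearZ /= mulrC.
Qed.

Lemma aux_pos (R : realFieldType) (mu h g P : R) :
  0 < mu -> 0 < h -> h * g <= mu * P -> g / mu <= h^-1 * P.
Proof.
move=> m0 h0 H.
have -> : h^-1 * P = (mu * P) / (h * mu) by field; rewrite ?gt_eqF.
have -> : g / mu = (h * g) / (h * mu) by field; rewrite ?gt_eqF.
by rewrite ler_pM2r // invr_gt0 mulr_gt0.
Qed.

Lemma aux_neg (R : realFieldType) (mu h g P : R) :
  0 < mu -> h < 0 -> h * g <= mu * P -> h^-1 * P <= g / mu.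
Proof.
move=> m0 h0 H.
have -> : h^-1 * P = (mu * P) / (h * mu) by field; rewrite gt_eqF ?lt_eqF.
have -> : g / mu = (h * g) / (h * mu) by field; rewrite gt_eqF ?lt_eqF.
by rewrite ler_nM2r // invr_lt0 nmulr_rlt0.
Qed.

Theorem lemmaA2 (R : realType) (n m : nat) (phi : 'rV[R]_m -> R)
  (lam : 'rV[R]_n) (xb : 'rV[R]_n) (yb : 'rV[R]_m) :
  sublinear phi ->
  enorm lam = 1 ->
  let C := [set z : 'rV[R]_n * 'rV[R]_m | phi z.2 <= dotv lam z.1] in
  C (xb, yb) ->
  differentiable phi yb ->
  phi yb = dotv lam xb ->
  exposes C (xb, yb) (- lam, grad phi yb) 0.
Proof.
move=> [cvx hom] nl C Cb dphi eqb.
have phi0 : phi 0 = 0.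
  have := hom 2 0 (ltr0Sn _ 1); rewrite scaler0 => h; lra.
have ll : dotv lam lam = 1.
  move: nl; rewrite /enorm -{1}sqrtr1 => /eqP; rewrite eqr_sqrt ?dotv_ge0 //.
  by move/eqP.
have hder v : derivable phi yb v by apply: diff_derivable.
have euler : 'd phi yb yb = phi yb.
  rewrite -deriveE //; apply: D_sandwich => [//|h h0|h h1 h0].
    rewrite (_ : h *: yb + yb = (h+1) *: yb); last by rewrite scalerDl scale1r.
    rewrite hom; last lra.
    by rewrite mulrDl mul1r addrK mulrA mulVf ?gt_eqF // mul1r.
  rewrite (_ : h *: yb + yb = (h+1) *: yb); last by rewrite scalerDl scale1r.
  rewrite hom; last lra.
  by rewrite mulrDl mul1r addrK mulrA mulVf ?lt_eqF // mul1r.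
split.
  by rewrite /pdot /= dotvNl dot_grad euler eqb addNr.
move=> [ga gb] d nt val eqd.
have Cin x y : phi y <= dotv lam x -> pdot (ga, gb) (x, y) <= d.
  by move=> H; apply: (val (x, y)).
rewrite /pdot /= in eqd.
have d0 : d = 0.
  have := Cin 0 0; rewrite phi0 /pdot /= !dotv0r addr0 => /(_ (lexx _)) H1.
  have := Cin (2 *: xb) (2 *: yb); rewrite hom // dotvZr -eqb lexx.
  rewrite /pdot /= !dotvZr => /(_ isT) H2; lra.
rewrite {}d0 in Cin val eqd *.
set c := dotv ga lam.
set ap := ga - c *: lam.
have lap : dotv lam ap = 0 by rewrite /ap dotvBr dotvZr ll mulr1 dotvC subrr.
have hga : ga = c *: lam.
  have := Cin ap 0; rewrite phi0 lap lexx /pdot /= dotv0r addr0 => /(_ isT).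
  rewrite {1}(_ : ga = ap + c *: lam); last by rewrite /ap subrK.
  rewrite dotvDl dotvZl lap mulr0 addr0 => /dotv_eq0 /eqP.
  by rewrite subr_eq0 => /eqP.
have cle : c <= 0.
  have := Cin lam 0; rewrite phi0 ll ler01 /pdot /= dotv0r addr0.
  by move=> /(_ isT).
have hy y : dotv gb y <= - c * phi y.
  have := Cin (phi y *: lam) y; rewrite dotvZr ll mulr1 lexx /pdot /=.
  rewrite hga dotvZl dotvZr ll mulr1 => /(_ isT) H; lra.
have hyb : dotv gb yb = - c * phi yb.
  move: eqd; rewrite hga dotvZl -eqb => H; lra.
have [c0|cneq] := eqVneq c 0.
  exfalso; apply: nt.
  have gb0 : gb = 0 by apply: dotv_eq0; have := hy gb; rewrite c0 oppr0 mul0r.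
  by rewrite hga c0 scale0r gb0.
have mu0 : 0 < - c by rewrite oppr_gt0 lt_neqAle cneq cle.
have hg : grad phi yb = (- c)^-1 *: gb.
  apply/rowP => j; rewrite /grad !mxE -deriveE // mulrC.
  apply: D_sandwich => [//|h h0|h h1 h0].
    apply: aux_pos => //.
    have := hy (h *: delta_mx 0 j + yb).
    rewrite dotvDr dotvZr dotv_delta hyb => H; lra.
  apply: aux_neg => //.
  have := hy (h *: delta_mx 0 j + yb).
  rewrite dotvDr dotvZr dotv_delta hyb => H; lra.
exists (- c); split => //; split; last by rewrite mulr0.
rewrite /= hg scalerA mulfV ?gt_eqF // scale1r hga.
by rewrite scalerN scaleNr opprK.
Qed.
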